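(* Let $p$ be a prime, $\alpha,\beta\ge1$, $x_0\in\mathbb{Z}_{p^\alpha}$, and let $\hat x_0\in\{0,\dots,p^\alpha-1\}$ be its least nonnegative representative. Let $\binom{0}{X-x_0}_{p^\alpha,p^\beta}$ be the map $\mathbb{Z}\to\mathbb{Z}_{p^\beta}$ with value $1$ at $x\equiv x_0\pmod{p^\alpha}$ and $0$ elsewhere. Then, with $d:=p^\alpha-1+(\beta-1)(p-1)p^{\alpha-1}$, $$\binom{0}{X-x_0}_{p^\alpha,p^\beta}=\sum_{\delta=0}^d\binom{\delta}{\delta-x_0}_{p^\alpha,p^\beta}\binom{X}{\delta}\in\mathbb{Z}_{p^\beta}\binom{X}{\mathbb{Z}_{p^\alpha}},$$ where $\delta-x_0$ is the residue class of $\delta-\hat x_0$ modulo $p^\alpha$. For $\beta=1$ this specializes to $$\binom{0}{X-x_0}_{p^\alpha,p}=\sum_{\delta=\hat x_0}^{p^\alpha-1}(-1)^{\delta-\hat x_0}\binom{\delta}{\delta-\hat x_0}\binom{X}{\delta}\quad(\text{coefficients mod }p),$$ and in particular $\binom{0}{X}_{p^\alpha,p}=\binom{X}{0}-\binom{X}{1}+\binom{X}{2}\mp\cdots+(-1)^{p^\alpha-1}\binom{X}{p^\alpha-1}$ over $\mathbb{Z}_p$.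
   Context: $\mathbb{Z}_r=\mathbb{Z}/r\mathbb{Z}$; $\binom{X}{\delta}=X(X-1)\cdots(X-\delta+1)/\delta!$, $\binom{X}{0}=1$. For integers $d\ge0$, $q\ge1$, $r\ge0$ and $x\in\mathbb{Z}_q$: $\binom{d}{x}_q:=\sum_{\hat x\in x,\,\hat x\ge0}(-1)^{\hat x}\binom{d}{\hat x}\in\mathbb{Z}$ and $\binom{d}{x}_{q,r}:=\binom{d}{x}_q+r\mathbb{Z}$. An equality between a map $\mathbb{Z}\to\mathbb{Z}_r$ and a polyfract $\sum_\delta P_\delta\binom{X}{\delta}$ ($P_\delta\in\mathbb{Z}_r$) means the map equals $x\mapsto\sum_\delta\binom{x}{\delta}P_\delta$. $\mathbb{Z}_r\binom{X}{\mathbb{Z}_q}$ denotes the set of such polyfracts whose map is $q$-periodic. *)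

(* Defs.v *)
(* Values in Z_r are represented by integers, equalities in
   Z_r by congruences mod r (intdiv). *)
From HB Require Import structures.
From mathcomp Require Import all_boot all_order all_algebra.
Set Implicit Arguments. Unset Strict Implicit. Unset Printing Implicit Defensive.
Import Order.TTheory GRing.Theory Num.Theory.
Local Open Scope ring_scope.

Definition binz (x : int) (k : nat) : int :=
  ((\prod_(i < k) (x - (i : nat)%:Z)) %/ (k`!)%:Z)%Z.

(* binq d q x = binom(d, x)_q = sum over nonnegative representatives xh of the
   class of x modulo q of (-1)^xh * C(d, xh).  Since C(d, xh) = 0 for xh > d,
   only xh in 0..d contribute. *)
Definition binq (d q : nat) (x : int) : int :=
  \sum_(0 <= k < d.+1 | (k%:Z == x %[mod q%:Z])%Z) (-1) ^+ k * ('C(d, k))%:Z.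

Definition indic (q : nat) (x0 x : int) : int :=
  if (x == x0 %[mod q%:Z])%Z then 1 else 0.

Definition pfeval (P : nat -> int) (d : nat) (x : int) : int :=
  \sum_(0 <= δ < d.+1) binz x δ * P δ.

(* Main.v *)
Require Import Defs.
From HB Require Import structures.
From mathcomp Require Import all_boot all_order all_algebra.
From mathcomp Require Import zify ring lra.
Set Implicit Arguments. Unset Strict Implicit. Unset Printing Implicit Defensive.
Import Order.TTheory GRing.Theory Num.Theory.
Local Open Scope ring_scope.

Definition Pk (x : int) (k : nat) : int := \prod_(i < k) (x - (i : nat)%:Z).

Lemma Pk_S1 x k : Pk (x + 1) k.+1 = (x + 1) * Pk x k.
Proof.
rewrite /Pk big_ord_recl /=; congr (_ * _).
  by rewrite subr0.
by apply: eq_bigr => i _; rewrite /bump /= -addn1 PoszD; ring.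
Qed.

Lemma Pk_S2 x k : Pk x k.+1 = Pk x k * (x - k%:Z).
Proof. by rewrite /Pk big_ord_recr. Qed.

Lemma Pk_diff x k : Pk (x + 1) k.+1 - Pk x k.+1 = k.+1%:Z * Pk x k.
Proof. rewrite Pk_S1 Pk_S2 -[k.+1]addn1 PoszD; ring. Qed.

Lemma int_ind2 (P : int -> Prop) : P 0 -> (forall x, P x <-> P (x + 1)) -> forall x, P x.
Proof.
move=> P0 PS.
have H : forall n : nat, P n%:Z /\ P (- n%:Z).
  elim=> [|n [IH1 IH2]]; first by rewrite oppr0; split.
  split.
    have -> : n.+1%:Z = n%:Z + 1 by rewrite -addn1 PoszD.
    exact: (PS _).1.
  apply: (PS _).2; have -> : - n.+1%:Z + 1 = - n%:Z by rewrite -addn1 PoszD; ring.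
  done.
by case=> n; [case: (H n) | rewrite NegzE; case: (H n.+1)].
Qed.

Lemma Pk_dvd k x : ((k`!)%:Z %| Pk x k)%Z.
Proof.
elim: k x => [|k IH] x; first by rewrite /Pk big_ord0 dvdz1.
move: x; apply: int_ind2.
  by rewrite /Pk big_ord_recl /= subr0 mul0r dvdz0.
move=> x; have := Pk_diff x k.
move=> E; have -> : Pk (x + 1) k.+1 = Pk x k.+1 + k.+1%:Z * Pk x k by rewrite -E; ring.
have H : ((k.+1`!)%:Z %| k.+1%:Z * Pk x k)%Z.
  by rewrite factS PoszM dvdz_mul2l // IH.
by rewrite rpredDr.
Qed.

Lemma binzE x k : Pk x k = binz x k * (k`!)%:Z.
Proof.
have /dvdzP [c Hc] := Pk_dvd k x.
rewrite /binz -/(Pk x k) Hc mulzK //.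
by rewrite eqz_nat -lt0n fact_gt0.
Qed.

Lemma binz0 x : binz x 0 = 1.
Proof. by rewrite /binz big_ord0. Qed.

Lemma binz0S k : binz 0 k.+1 = 0.
Proof. by rewrite /binz big_ord_recl /= subr0 mul0r div0z. Qed.

Lemma binz_pascal y k : binz (y + 1) k.+1 = binz y k.+1 + binz y k.
Proof.
have E := Pk_diff y k.
rewrite !binzE factS PoszM in E.
have Hn : (k`!)%:Z * k.+1%:Z != 0 by rewrite mulf_eq0 negb_or !eqz_nat -!lt0n fact_gt0.
apply: (mulIf Hn).
have E' : binz (y+1) k.+1 * ((k`!)%:Z * k.+1%:Z) = binz y k.+1 * ((k`!)%:Z * k.+1%:Z) + k.+1%:Z * (binz y k * (k`!)%:Z).
  by rewrite -E; ring.
by rewrite E'; ring.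
Qed.

Lemma pascal_sum (a : nat -> int) n :
  \sum_(0 <= i < n.+2) ('C(n.+1, i))%:Z * a i =
  \sum_(0 <= i < n.+1) ('C(n, i))%:Z * a i + \sum_(0 <= i < n.+1) ('C(n, i))%:Z * a i.+1.
Proof.
rewrite big_nat_recl //.
under eq_bigr do rewrite binS PoszD mulrDl.
rewrite big_split /= addrA; congr (_ + _).
rewrite [X in _ = X]big_nat_recl // [X in _ + X = _]big_nat_recr //=.
by rewrite (@bin_small n n.+1) // mul0r addr0 !bin0.
Qed.

Definition Lop (n : nat) (F : int -> int) (y : int) : int :=
  \sum_(0 <= i < n.+1) (-1) ^+ i * ('C(n, i))%:Z * F (y + i%:Z).

Lemma Lop0 F y : Lop 0 F y = F y.
Proof. by rewrite /Lop big_nat1 expr0 bin0 !mul1r addr0. Qed.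

Lemma Lop_S n F y : Lop n.+1 F y = Lop n F y - Lop n F (y + 1).
Proof.
rewrite /Lop.
have := pascal_sum (fun i => (-1) ^+ i * F (y + i%:Z)) n.
under eq_bigr do rewrite mulrA [_ * (-1) ^+ _]mulrC.
move=> ->; congr (_ + _).
  by apply: eq_bigr => i _; rewrite mulrA [_ * (-1) ^+ _]mulrC.
rewrite -sumrN; apply: eq_bigr => i _.
rewrite exprS -addn1 PoszD addrA.
have -> : y + 1 + i%:Z = y + i%:Z + 1 by ring.
ring.
Qed.

Lemma Lop_binz n δ y :
  Lop n (fun x => binz x δ) y = if (n <= δ)%N then (-1) ^+ n * binz y (δ - n) else 0.
Proof.
elim: n y => [|n IH] y; first by rewrite Lop0 expr0 mul1r subn0.
rewrite Lop_S !IH.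
have [H1|H1] := leqP n δ; last first.
  by have -> : (n.+1 <= δ)%N = false by lia.
have [H2|H2] := leqP n.+1 δ.
  have -> : (δ - n = (δ - n.+1).+1)%N by lia.
  rewrite binz_pascal exprS; ring.
have -> : δ = n by lia.
by rewrite subnn !binz0 subrr.
Qed.

Lemma Lop_lin n (P : nat -> int) d y :
  Lop n (fun x => \sum_(0 <= δ < d) binz x δ * P δ) y =
  \sum_(0 <= δ < d) Lop n (fun x => binz x δ) y * P δ.
Proof.
rewrite /Lop.
under eq_bigr do rewrite big_distrr.
rewrite exchange_big /=; apply: eq_bigr => δ _.
rewrite big_distrl /=; apply: eq_bigr => i _; ring.
Qed.

Lemma newton F n y :
  F (y + n%:Z) = \sum_(0 <= δ < n.+1) ('C(n, δ))%:Z * ((-1) ^+ δ * Lop δ F y).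
Proof.
elim: n y => [|n IH] y.
  by rewrite big_nat1 bin0 expr0 !mul1r Lop0 addr0.
rewrite pascal_sum.
have -> : y + n.+1%:Z = (y + 1) + n%:Z by rewrite -addn1 PoszD; ring.
rewrite IH -big_split /=; apply: eq_bigr => i _.
have := Lop_S i F y => E.
have -> : Lop i F (y + 1) = Lop i F y - Lop i.+1 F y by rewrite E; ring.
rewrite exprS; ring.
Qed.

Lemma modeq_shift (q : nat) (a b c : int) :
  (a + b == c %[mod q%:Z])%Z = (b == c - a %[mod q%:Z])%Z.
Proof. by rewrite !eqz_mod_dvd; have -> : a + b - c = b - (c - a) by ring. Qed.

Lemma Lop_indic q x0 n y : Lop n (indic q x0) y = binq n q (x0 - y).
Proof.
rewrite /Lop /binq [RHS]big_mkcond /=; apply: eq_bigr => i _.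
by rewrite /indic modeq_shift; case: ifP => _; rewrite ?mulr1 ?mulr0.
Qed.

Lemma sgn_sub n i : (i <= n)%N -> (-1) ^+ (n - i) = (-1) ^+ n * (-1) ^+ i :> int.
Proof.
move=> H; rewrite -{2}(subnK H) exprD -mulrA -exprD addnn -muln2 mulnC exprM.
by rewrite sqrrN !expr1n mulr1.
Qed.

Lemma binq_rev n q x : binq n q (n%:Z - x) = (-1) ^+ n * binq n q x.
Proof.
rewrite /binq big_nat_rev /= big_distrr /= !big_mkcond /=.
rewrite [RHS]big_mkcond /=.
apply: eq_big_nat => i /andP [_ Hi].
rewrite add0n subSS.
have -> : ((n - i)%N%:Z == n%:Z - x %[mod q%:Z])%Z = (i%:Z == x %[mod q%:Z])%Z.
  rewrite !eqz_mod_dvd -subzn // rpredBC.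
  by have -> : n%:Z - x - (n%:Z - i%:Z) = i%:Z - x by ring.
case: ifP => _ //.
by rewrite bin_sub // sgn_sub // mulrA.
Qed.

Section Alg.
Variable R : comRingType.

Lemma sq_expand (u w : R) n : exists k,
  (u + w) ^+ n.+1 = u ^+ n.+1 + n.+1%:R * u ^+ n * w + w ^+ 2 * k.
Proof.
elim: n => [|n [k Hk]]; first by exists 0; rewrite expr1 expr0 mulr1 mulr0 addr0 mul1r.
exists (u * k + n.+1%:R * u ^+ n + w * k).
rewrite exprS Hk !exprS.
rewrite -[n.+2]addn1 natrD -[n.+1]addn1 natrD; ring.
Qed.

Lemma frob1 (p : nat) (U : R) : prime p -> exists g,
  (U + 1) ^+ p = U ^+ p + 1 + p%:R * U * g.
Proof.
move=> pp; have p2 := prime_gt1 pp.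
case: p pp p2 => [//|n] pp p2.
rewrite exprD1n big_ord_recl big_ord_recr /= bin0 binn expr0 mulr1n mulr1n.
exists (\sum_(i < n) U ^+ i *+ ('C(n.+1, i.+1) %/ n.+1)).
rewrite mulr_sumr.
have -> : \sum_(i < n) U ^+ bump 0 i *+ 'C(n.+1, bump 0 i) =
   \sum_(i < n) n.+1%:R * U * (U ^+ i *+ ('C(n.+1, i.+1) %/ n.+1)).
  apply: eq_bigr => i _.
  have Hd : (n.+1 %| 'C(n.+1, i.+1))%N.
    by apply: prime_dvd_bin => //; rewrite /= ltnS ltn_ord.
  rewrite /bump /= add1n -{1}(divnK Hd) mulrnA -[U ^+ i *+ _]mulr_natl -[_ *+ n.+1]mulr_natl exprS; ring.
rewrite /bump /= add1n.
set S := \sum_(i < n) _; ring.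
Qed.

Lemma frob_pow (p : nat) (x : R) : prime p -> forall j, exists e,
  (x - 1) ^+ (p ^ j) = x ^+ (p ^ j) - 1 + p%:R * e.
Proof.
move=> pp; have p2 := prime_gt1 pp.
elim=> [|j [e He]]; first by exists 0; rewrite expn0 !expr1 mulr0 addr0.
have [g Hg] := frob1 (x ^+ (p ^ j) - 1) pp.
case: p pp p2 Hg He => [//|n] pp p2 Hg He.
have [k Hk] := sq_expand (x ^+ (n.+1 ^ j) - 1) (n.+1%:R * e) n.
exists (- (x ^+ (n.+1 ^ j) - 1) * g + (x ^+ (n.+1 ^ j) - 1) ^+ n * e * n.+1%:R + n.+1%:R * e ^+ 2 * k).
rewrite expnSr exprM He Hk.
have E : (x ^+ (n.+1 ^ j) - 1) ^+ n.+1 = x ^+ (n.+1 ^ j * n.+1) - 1 - n.+1%:R * (x ^+ (n.+1 ^ j) - 1) * g.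
  rewrite subrK in Hg; rewrite exprM Hg; ring.
rewrite E; ring.
Qed.

Lemma key (p : nat) (x : R) (s : nat) : prime p -> (exists j, s = p ^ j)%N -> exists u v w,
  ((x - 1) ^+ s) ^+ p = (x ^+ (s * p) - 1) * u + p%:R * (x - 1) ^+ s * v + p%:R ^+ 2 * w.
Proof.
move=> pp [j ->]; have p2 := prime_gt1 pp.
case: p pp p2 => [//|n] pp p2.
have [e He] := frob_pow x pp j.
set T := x ^+ (n.+1 ^ j) in He *.
have [g Hg] := frob1 (T - 1) pp.
have [k Hk] := sq_expand (T - 1) (n.+1%:R * e) n.
exists 1, (- g), ((T - 1) ^+ n * e + e ^+ 2 * k + e * g).
rewrite He Hk exprM -/T.
have E : (T - 1) ^+ n.+1 = T ^+ n.+1 - 1 - n.+1%:R * (T - 1) * g.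
  rewrite subrK in Hg; rewrite Hg; ring.
rewrite E; ring.
Qed.

Lemma inv_step (Z Phi P u v w : R) (n : nat) :
  Z ^+ n.+2 = Phi * u + P * Z * v + P ^+ 2 * w ->
  forall k, exists a b c, Z ^+ (1 + k * n.+1) = P ^+ k * (Z * a + P * b) + Phi * c.
Proof.
move=> H; elim=> [|k [a [b [c E]]]].
  by exists 1, 0, 0; rewrite mul0n addn0 expr1 expr0; ring.
exists (v * a + Z ^+ n * b), (w * a), (P ^+ k * u * a + Z ^+ n.+1 * c).
have -> : (1 + k.+1 * n.+1 = n.+1 + (1 + k * n.+1))%N by lia.
rewrite exprD E.
have E2 : Z ^+ n.+1 * Z = Phi * u + P * Z * v + P ^+ 2 * w by rewrite -exprSr.
have E3 : Z ^+ n.+1 = Z ^+ n * Z by rewrite exprSr.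
transitivity (P ^+ k * (Z ^+ n.+1 * Z) * a + P ^+ k * P * (Z ^+ n.+1) * b + Phi * Z ^+ n.+1 * c); first ring.
rewrite E2 {1}E3 [P ^+ k.+1]exprSr; ring.
Qed.
End Alg.

Lemma coef_1subX n k : ((1 - 'X : {poly int}) ^+ n)`_k = (-1) ^+ k * ('C(n, k))%:Z.
Proof.
elim: n k => [|n IH] k.
  by rewrite expr0 coef1; case: k => [|k] //=; rewrite bin0n mulr0.
rewrite exprS mulrBl mul1r coefB coefXM IH.
case: k => [|k] /=; first by rewrite subr0 !bin0.
by rewrite IH binS PoszD exprS; ring.
Qed.

Lemma shiftsum (q N : nat) (a : int) (C : {poly int}) : (size C + q <= N)%N ->
  \sum_(0 <= k < N | (k%:Z == a %[mod q%:Z])%Z) ('X^q * C)`_k =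
  \sum_(0 <= k < N | (k%:Z == a %[mod q%:Z])%Z) C`_k.
Proof.
move=> HN; rewrite !big_mkcond /=.
rewrite (@big_cat_nat _ _ _ q) /=; [|lia|lia].
rewrite big1_seq ?add0r; last first.
  move=> i /andP [_]; rewrite mem_index_iota => /andP [_ Hi].
  by rewrite coefXnM Hi; case: ifP.
rewrite -{1}[q]add0n big_addn.
rewrite [RHS](@big_cat_nat _ _ _ (N - q)) /=; [|lia|lia].
rewrite [X in _ = _ + X]big1_seq ?addr0; last first.
  move=> i /andP [_]; rewrite mem_index_iota => /andP [Hi _].
  have H : (size C <= N - q)%N by lia.
  by rewrite nth_default ?if_same //; exact: leq_trans H Hi.
rewrite [RHS]big_mkcond; apply: eq_bigr => i _.
rewrite coefXnM ltnNge leq_addl /= addnK.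
have -> : ((i + q)%N%:Z == a %[mod q%:Z])%Z = (i%:Z == a %[mod q%:Z])%Z.
  rewrite PoszD !eqz_mod_dvd.
  have -> : i%:Z + q%:Z - a = (i%:Z - a) + q%:Z by ring.
  by rewrite rpredDr // dvdzz.
by [].
Qed.

Lemma core_poly p α β : prime p -> (1 <= α)%N -> exists W C : {poly int},
  (1 - 'X) ^+ (p ^ (α - 1) * (1 + β * (p - 1))) = (p ^ β)%:R * W + ('X^(p ^ α) - 1) * C.
Proof.
move=> pp Ha.
have [u [v [w H]]] := key ('X : {poly int}) pp (ex_intro (fun j => p ^ (α - 1) = p ^ j)%N (α - 1)%N erefl).
have Hsp : (p ^ (α - 1) * p = p ^ α)%N by rewrite -expnSr; have -> : (α - 1).+1 = α by lia.
rewrite Hsp in H.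
have p2 := prime_gt1 pp.
case: p pp p2 u v w H Hsp => [//|[//|n]] pp p2 u v w H Hsp.
have [a [b [c E]]] := inv_step H β.
set m := (_ * _)%N.
exists ((-1) ^+ m * (('X - 1) ^+ (n.+2 ^ (α - 1)) * a + n.+2%:R * b)), ((-1) ^+ m * c).
have -> : (1 - 'X : {poly int}) = - ('X - 1) by ring.
rewrite [LHS]exprNn /m [in X in _ * X = _]exprM.
have -> : (n.+2 - 1 = n.+1)%N by lia.
rewrite E natrX; ring.
Qed.

Lemma binq_core p α β (x : int) : prime p -> (1 <= α)%N ->
  ((p ^ β)%:Z %| binq (p ^ (α - 1) * (1 + β * (p - 1))) (p ^ α) x)%Z.
Proof.
move=> pp Ha.
have [W [C E]] := core_poly β pp Ha.
set D := (p ^ (α - 1) * _)%N in E *.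
set q := (p ^ α)%N in E *.
set N := (D.+1 + size W + size C + q)%N.
have -> : binq D q x = \sum_(0 <= k < N | (k%:Z == x %[mod q%:Z])%Z) ((1 - 'X) ^+ D)`_k.
  rewrite /binq [RHS](@big_cat_nat _ _ _ D.+1) /=; [|lia|lia].
  rewrite [X in _ = _ + X]big1_seq ?addr0; last first.
    move=> i /andP [_]; rewrite mem_index_iota => /andP [Hi _].
    by rewrite coef_1subX bin_small ?mulr0.
  by apply: eq_bigr => i _; rewrite coef_1subX.
rewrite E.
under eq_bigr do rewrite coefD mulr_natl coefMn mulrBl coefB mul1r.
rewrite big_split big_split /= shiftsum; last by rewrite /N; lia.
rewrite sumrN addrN addr0 sumrMnl -mulr_natr natz.
by apply: dvdz_mull; exact: dvdzz.
Qed.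

Lemma Lop_sub n F G y : Lop n (fun x => F x - G x) y = Lop n F y - Lop n G y.
Proof. by rewrite /Lop -sumrB; apply: eq_bigr => i _; ring. Qed.

Lemma binz0n k : binz 0 k = (k == 0)%:R.
Proof. by case: k => [|k]; rewrite ?binz0 ?binz0S. Qed.

Lemma Lop_g_small P d δ : (δ <= d)%N ->
  Lop δ (fun x => pfeval P d x) 0 = (-1) ^+ δ * P δ.
Proof.
move=> Hd; rewrite /pfeval Lop_lin.
under eq_bigr => i _ do rewrite Lop_binz binz0n.
have -> : \sum_(0 <= i < d.+1)
     (if (δ <= i)%N then (-1) ^+ δ * ((i - δ)%N == 0%N)%:R else 0) * P i =
   \sum_(0 <= i < d.+1) (if i == δ then (-1) ^+ δ * P i else 0).
  apply: eq_bigr => i _.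
  have [H|H] := leqP δ i.
    case: (eqVneq i δ) => [->|Hne]; first by rewrite subnn eqxx mulr1.
    rewrite (_ : (i - δ == 0)%N = false); last by lia.
    by rewrite mulr0 mul0r.
  rewrite (_ : (i == δ) = false); last by lia.
  by rewrite mul0r.
rewrite -big_mkcond big_mkord (big_ord1_eq _ (fun i => (-1) ^+ δ * P i)).
by rewrite ltnS Hd.
Qed.

Lemma Lop_g_big P d δ y : (d < δ)%N ->
  Lop δ (fun x => pfeval P d x) y = 0.
Proof.
move=> Hd; rewrite /pfeval Lop_lin big1_seq // => i /andP [_].
rewrite mem_index_iota => /andP [_ Hi].
by rewrite Lop_binz (_ : (δ <= i)%N = false) ?mul0r //; lia.
Qed.

Lemma sgnsq n : (-1) ^+ n * (-1) ^+ n = 1 :> int.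
Proof. by rewrite -exprD addnn -muln2 mulnC exprM sqrrN !expr1n. Qed.

Lemma main_div p α β x0 : prime p -> (1 <= α)%N -> (1 <= β)%N ->
  forall x, ((p ^ β)%:Z %|
    pfeval (fun δ => binq δ (p ^ α) (δ%:Z - x0)) (p ^ α - 1 + (β - 1) * (p - 1) * p ^ (α - 1)) x
    - indic (p ^ α) x0 x)%Z.
Proof.
move=> pp Ha Hb.
set q := (p ^ α)%N; set r := (p ^ β)%N; set d := (q - 1 + _)%N.
set P := fun δ : nat => _.
set f := indic q x0; set g := pfeval P d.
have p2 := prime_gt1 pp.
have HD : d.+1 = (p ^ (α - 1) * (1 + β * (p - 1)))%N.
  have Hq : q = (p ^ (α - 1) * p)%N by rewrite /q -expnSr; have -> : (α - 1).+1 = α by lia.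
  have Hs : (0 < p ^ (α - 1))%N by rewrite expn_gt0; lia.
  rewrite /d Hq; move: Hs; set s := (p ^ (α - 1))%N; nia.
have F3 : forall k y, (r%:Z %| Lop (d.+1 + k) f y)%Z.
  elim=> [|k IH] y.
    by rewrite addn0 /f Lop_indic HD; apply: binq_core.
  by rewrite addnS Lop_S rpredB.
have F5 : forall n : nat, (r%:Z %| g n%:Z - f n%:Z)%Z.
  move=> n; have := newton (fun x => g x - f x) n 0; rewrite add0r => ->.
  apply: rpred_sum => δ _; apply: dvdz_mull; apply: dvdz_mull.
  rewrite Lop_sub.
  have [Hd|Hd] := leqP δ d.
    rewrite Lop_g_small // /f Lop_indic /P binq_rev subr0 mulrA sgnsq mul1r subrr.
    exact: dvdz0.
  rewrite Lop_g_big // sub0r rpredN.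
  have -> : δ = (d.+1 + (δ - d.+1))%N by lia.
  exact: F3.
have F6 : forall (m : nat) (z : int), - m%:Z <= z -> (r%:Z %| g z - f z)%Z.
  elim=> [|m IH] z Hz.
    by case: z Hz => [n _|n]; [exact: F5 | rewrite NegzE; lia].
  have [Hzm|Hzm] := lerP (- m%:Z) z; first exact: IH.
  have L : (r%:Z %| Lop d.+1 (fun x => g x - f x) z)%Z.
    by rewrite Lop_sub Lop_g_big // sub0r rpredN -[d.+1]addn0 F3.
  rewrite /Lop big_nat_recl // expr0 bin0 !mul1r addr0 in L.
  rewrite -(rpredDr _ (x := \sum_(0 <= i < d.+1) (-1) ^+ i.+1 * ('C(d.+1, i.+1))%:Z * (g (z + i.+1%:Z) - f (z + i.+1%:Z)))) //.
  apply: rpred_sum => i _; apply: dvdz_mull; apply: IH.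
  lia.
move=> x; apply: (F6 `|x|%N).
lia.
Qed.

Lemma P_small q δ x0 : (0 < q)%N -> (δ < q)%N ->
  binq δ q (δ%:Z - x0) =
  if (`|(x0 %% q%:Z)%Z|%N <= δ)%N
  then (-1) ^+ (δ - `|(x0 %% q%:Z)%Z|%N) * ('C(δ, δ - `|(x0 %% q%:Z)%Z|%N))%:Z else 0.
Proof.
move=> q0 dq.
set m := (x0 %% q%:Z)%Z.
have m0 : 0 <= m by apply: modz_ge0; rewrite eqz_nat -lt0n.
have mq : m < q%:Z by apply: ltz_pmod; rewrite ltz_nat.
set h := `|m|%N.
have hm : h%:Z = m by rewrite /h; lia.
have Hx : x0 = (x0 %/ q%:Z)%Z * q%:Z + m by exact: divz_eq.
have cond : forall k, (k <= δ)%N ->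
    ((k%:Z == δ%:Z - x0 %[mod q%:Z])%Z = ((k == δ - h)%N && (h <= δ)%N)).
  move=> k kd; rewrite eqz_mod_dvd.
  have -> : k%:Z - (δ%:Z - x0) = (k%:Z - δ%:Z + h%:Z) + (x0 %/ q%:Z)%Z * q%:Z.
    by rewrite hm {1}Hx; ring.
  rewrite rpredDr; last by apply: dvdz_mull; exact: dvdzz.
  apply/idP/idP.
    move=> /dvdzP [c Hc].
    have Hc0 : c = 0 by nia.
    rewrite Hc0 mul0r in Hc.
    apply/andP; split; [apply/eqP|]; lia.
  move=> /andP [/eqP Hk Hh].
  have -> : k%:Z - δ%:Z + h%:Z = 0 by lia.
  exact: dvdz0.
rewrite /binq big_mkcond /=.
rewrite (@eq_big_nat _ _ _ 0 δ.+1 _ (fun k => if ((k == δ - h)%N && (h <= δ)%N) then (-1) ^+ k * ('C(δ, k))%:Z else 0)); last first.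
  by move=> k /andP [_ Hk]; rewrite cond.
case: ifP => Hh.
  under eq_bigr do rewrite andbT.
  rewrite -big_mkcond big_mkord (big_ord1_eq _ (fun k => (-1) ^+ k * ('C(δ, k))%:Z)).
  by rewrite ltnS leq_subr.
by rewrite big1 // => k _; rewrite andbF.
Qed.

Lemma indic_shift q x0 x : indic q x0 (x + q%:Z) = indic q x0 x.
Proof.
rewrite /indic !eqz_mod_dvd.
have -> : x + q%:Z - x0 = (x - x0) + q%:Z by ring.
by rewrite rpredDr // dvdzz.
Qed.

Lemma main_mod p α β x0 : prime p -> (1 <= α)%N -> (1 <= β)%N ->
  forall x, (indic (p ^ α) x0 x =
    pfeval (fun δ => binq δ (p ^ α) (δ%:Z - x0)) (p ^ α - 1 + (β - 1) * (p - 1) * p ^ (α - 1)) x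
    %[mod (p ^ β)%:Z])%Z.
Proof.
move=> pp Ha Hb x; apply/eqP; rewrite eqz_mod_dvd rpredBC.
exact: main_div.
Qed.

Lemma spec1 p α x0 : prime p -> (1 <= α)%N -> forall x : int,
  (indic (p ^ α) x0 x =
   \sum_(`|(x0 %% (p ^ α)%:Z)%Z|%N <= δ < p ^ α)
     (-1) ^+ (δ - `|(x0 %% (p ^ α)%:Z)%Z|%N) * ('C(δ, δ - `|(x0 %% (p ^ α)%:Z)%Z|%N))%:Z * binz x δ
   %[mod p%:Z])%Z.
Proof.
move=> pp Ha x.
have := main_mod x0 pp Ha (leqnn 1) x.
rewrite expn1 => ->; congr (_ %% _)%Z.
set q := (p ^ α)%N.
have q0 : (0 < q)%N by rewrite expn_gt0 prime_gt0.
rewrite /pfeval.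
have -> : (q - 1 + (1 - 1) * (p - 1) * p ^ (α - 1)).+1 = q by lia.
set h := `|(x0 %% q%:Z)%Z|%N.
have hq : (h < q)%N.
  have : (x0 %% q%:Z)%Z < q%:Z by apply: ltz_pmod; rewrite ltz_nat.
  have : 0 <= (x0 %% q%:Z)%Z by apply: modz_ge0; rewrite eqz_nat -lt0n.
  rewrite /h; lia.
rewrite (@big_cat_nat _ _ _ h) /=; [|lia|lia].
rewrite big1_seq ?add0r; last first.
  move=> i /andP [_]; rewrite mem_index_iota => /andP [_ Hi].
  rewrite P_small // ?(ltn_trans Hi hq) // -/q -/h.
  by rewrite leqNgt Hi /= mulr0.
apply: eq_big_nat => i /andP [Hi Hiq].
by rewrite P_small -/q -/h // Hi mulrC.
Qed.

Theorem theorem3p6 (p alpha beta : nat) (x0 : int) :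
  prime p -> (1 <= alpha)%N -> (1 <= beta)%N ->
  let q := (p ^ alpha)%N in
  let r := (p ^ beta)%N in
  let d := (q - 1 + (beta - 1) * (p - 1) * p ^ (alpha - 1))%N in
  let x0h := `|(x0 %% q%:Z)%Z|%N in
  let P := fun δ : nat => binq δ q (δ%:Z - x0) in
  (* main identity, as maps Z -> Z_r *)
  (forall x : int, indic q x0 x = pfeval P d x %[mod r%:Z])%Z
  (* the polyfract lies in Z_r binom(X, Z_q): its map is q-periodic *)
  /\ (forall x : int, pfeval P d (x + q%:Z) = pfeval P d x %[mod r%:Z])%Z
  (* specialization beta = 1 *)
  /\ (beta = 1%N -> forall x : int,
        indic q x0 x =
        \sum_(x0h <= δ < q) (-1) ^+ (δ - x0h) * ('C(δ, δ - x0h))%:Z * binz x δ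
        %[mod p%:Z])%Z
  (* in particular x0 = 0 *)
  /\ (forall x : int,
        indic q 0 x = \sum_(0 <= δ < q) (-1) ^+ δ * binz x δ %[mod p%:Z])%Z.
Proof.
move=> pp Ha Hb q r d x0h P.
have H1 := main_mod x0 pp Ha Hb.
split; first exact: H1.
split.
  by move=> x; rewrite -(H1 (x + q%:Z)) -(H1 x) indic_shift.
split; first by move=> _; exact: spec1.
move=> x; rewrite (spec1 0 pp Ha x) mod0z /=.
congr (_ %% _)%Z; apply: eq_bigr => i _.
by rewrite subn0 binn mulr1.
Qed.
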